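(* For any dimension $d>0$ and $\delta>0$, there exists a ReLU neural network $\mathcal N:\mathbb{R}^d \to \mathbb{R}^d$ with 2 hidden layers, width $4d^2$, and magnitudes of weights at most $\frac{1}{\delta}$, that sorts (outputs the entries in ascending order) any input $\mathbf{x} \in \mathcal S^{d}_{\delta}$ all of whose entries are non-zero. For general input $\mathbf{x}\in\mathbb{R}^d$, every output value is bounded in magnitude by $d \|\mathbf{x}\|_{\infty}$.
   Context: $\mathcal S^d_\delta$ is the set of vectors $\mathbf{x}\in\mathbb{R}^d$ whose non-zero entries all lie in $[\delta,1-\delta]$ and are pairwise at distance at least $\delta$ (i.e. $|x_i-x_j|\ge\delta$ for all $i\ne j$ with $x_i,x_j$ non-zero). A ReLU network applies $[z]_+=\max\{0,z\}$ after each affine hidden map, with an affine output layer; width is the number of neurons in the largest hidden layer. *)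

(* Defs.v *)
From HB Require Import structures.
From mathcomp Require Import all_boot all_order all_algebra all_fingroup.
From mathcomp Require Import reals.
Set Implicit Arguments. Unset Strict Implicit. Unset Printing Implicit Defensive.
Import Order.TTheory GRing.Theory Num.Theory.
Local Open Scope ring_scope.

Definition relu (R : realType) (z : R) : R := Num.max 0 z.
Definition relu_mx (R : realType) (n : nat) (v : 'cV[R]_n) : 'cV[R]_n :=
  map_mx (@relu R) v.

Definition relu_net2 (R : realType) (d h1 h2 e : nat)
  (W1 : 'M[R]_(h1, d)) (b1 : 'cV[R]_h1)
  (W2 : 'M[R]_(h2, h1)) (b2 : 'cV[R]_h2)
  (W3 : 'M[R]_(e, h2)) (b3 : 'cV[R]_e) (x : 'cV[R]_d) : 'cV[R]_e :=
  W3 *m relu_mx (W2 *m relu_mx (W1 *m x + b1) + b2) + b3.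

Definition entries_bounded (R : realType) (m n : nat) (A : 'M[R]_(m, n)) (c : R) : Prop :=
  forall i j, `|A i j| <= c.

Definition in_S (R : realType) (d : nat) (delta : R) (x : 'cV[R]_d) : Prop :=
  (forall i, x i ord0 != 0 -> delta <= x i ord0 <= 1 - delta) /\
  (forall i j, i != j -> x i ord0 != 0 -> x j ord0 != 0 ->
     delta <= `|x i ord0 - x j ord0|).

Definition sorts_to (R : realType) (d : nat) (x y : 'cV[R]_d) : Prop :=
  (exists s : {perm 'I_d}, forall i, y i ord0 = x (s i) ord0) /\
  (forall i j : 'I_d, (i <= j)%N -> y i ord0 <= y j ord0).

Definition linf (R : realType) (d : nat) (x : 'cV[R]_d) : R :=
  \big[Num.max/0]_(i < d) `|x i ord0|.

(* Main.v *)
Require Import Defs.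
From HB Require Import structures.
From mathcomp Require Import all_boot all_order all_algebra all_fingroup.
From mathcomp Require Import reals.
From mathcomp Require Import zify ring lra.
Set Implicit Arguments. Unset Strict Implicit. Unset Printing Implicit Defensive.
Import Order.TTheory GRing.Theory Num.Theory.
Local Open Scope ring_scope.

Definition T4 (d : nat) := (bool * bool * 'I_d * 'I_d)%type.

Lemma cardT4 d : #|{: T4 d}| = (4 * d ^ 2)%N.
Proof. rewrite /T4 !card_prod !card_bool !card_ord; lia. Qed.

Definition e4 d (a : 'I_(4 * d ^ 2)) : T4 d := enum_val (cast_ord (esym (cardT4 d)) a).

Lemma e4_bij d : bijective (@e4 d).
Proof.
exists (fun t => cast_ord (cardT4 d) (enum_rank t)) => a.
  by rewrite /e4 enum_valK cast_ordKV.
by rewrite /e4 cast_ordK enum_rankK.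
Qed.

Lemma sumE (R : realType) d (F : T4 d -> R) :
  \sum_(a < 4 * d ^ 2) F (e4 a) = \sum_t F t.
Proof. by rewrite (reindex (@e4 d)) //; apply: onW_bij; apply: e4_bij. Qed.

Lemma sumT4 (R : realType) d (F : T4 d -> R) :
  \sum_t F t = \sum_b \sum_c \sum_i \sum_j F (b, c, i, j).
Proof.
rewrite pair_big pair_big pair_big /=.
by apply: eq_bigr => [[[[b c] i] j]] _.
Qed.

Lemma sum_delta (R : realType) d (f : 'I_d -> R) i :
  \sum_m (if m == i then f m else 0) = f i.
Proof. by rewrite -big_mkcond big_pred1_eq. Qed.
Section Net.
Context (R : realType) (d : nat) (dl : R).

Definition w1 (t : T4 d) (m : 'I_d) : R :=
  let: (b, c, i, j) := t in
  if b then (if m == i then 1 else 0)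
  else ((if m == i then 1 else 0) - (if m == j then 1 else 0)) / dl.
Definition bb1 (t : T4 d) : R :=
  let: (b, c, i, j) := t in if ~~ b && c then -1 else 0.
Definition w2 (u t : T4 d) : R :=
  let: (c1, c2, i, k) := u in let: (b, c, i', j) := t in
  if b then (if ~~ c1 && ~~ c && (i' == i) && (j == i) then 1 else 0)
  else (if i' == i then (if c then 1 else -1) else 0).
Definition bb2 (u : T4 d) : R :=
  let: (c1, c2, i, k) := u in (k : nat)%:R - (c2 : nat)%:R.
Definition w3 (k : 'I_d) (u : T4 d) : R :=
  let: (c1, c2, i, k') := u in
  if k' == k then (if c1 then -1 else 1) * (if c2 then -1 else 1) else 0.

Definition W1 : 'M[R]_(4 * d ^ 2, d) := \matrix_(a, m) w1 (e4 a) m.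
Definition B1 : 'cV[R]_(4 * d ^ 2) := \col_a bb1 (e4 a).
Definition W2 : 'M[R]_(4 * d ^ 2, 4 * d ^ 2) := \matrix_(a, a') w2 (e4 a) (e4 a').
Definition B2 : 'cV[R]_(4 * d ^ 2) := \col_a bb2 (e4 a).
Definition W3 : 'M[R]_(d, 4 * d ^ 2) := \matrix_(k, a) w3 k (e4 a).
Definition B3 : 'cV[R]_d := 0.

Definition step (z : R) := relu (z / dl) - relu (z / dl - 1).
Definition rk (x : 'cV[R]_d) i := \sum_j step (x i ord0 - x j ord0).
Definition pp (x : 'cV[R]_d) i := relu (x i ord0).
Definition Gf (p r c : R) := relu (p + c - r) - relu (c - r).
Definition yk (x : 'cV[R]_d) (k : 'I_d) :=
  \sum_i (Gf (pp x i) (rk x i) (k : nat)%:R - Gf (pp x i) (rk x i) ((k : nat)%:R - 1)).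

Definition H1 (x : 'cV[R]_d) (t : T4 d) := relu (\sum_m w1 t m * x m ord0 + bb1 t).
Definition H2 (x : 'cV[R]_d) (u : T4 d) := relu (\sum_t w2 u t * H1 x t + bb2 u).

Lemma H1E x b c i j : H1 x (b, c, i, j) =
  if b then relu (x i ord0) else
  if c then relu ((x i ord0 - x j ord0) / dl - 1) else relu ((x i ord0 - x j ord0) / dl).
Proof.
rewrite /H1 /=.
have S1 : forall (f : 'I_d -> R) (i0 : 'I_d), \sum_m (if m == i0 then 1 else 0) * f m = f i0.
  by move=> f i0; rewrite -(sum_delta (fun m => f m)); apply: eq_bigr => m _; case: ifP; rewrite ?mul1r ?mul0r.
case: b => /=; first by rewrite S1 addr0.
have -> : \sum_m ((if m == i then 1 else 0) - (if m == j then 1 else 0)) / dl * x m ord0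
   = (x i ord0 - x j ord0) / dl.
  rewrite -(S1 (fun m => x m ord0) i) -(S1 (fun m => x m ord0) j) -sumrB mulr_suml; apply: eq_bigr => m _; by rewrite mulrAC mulrBl.
by case: c => /=; rewrite ?addr0.
Qed.


Lemma H2E x c1 c2 i k : H2 x (c1, c2, i, k) =
  relu ((if c1 then 0 else pp x i) + (k : nat)%:R - (c2 : nat)%:R - rk x i).
Proof.
rewrite /H2 sumT4 !big_bool /=.
have Z : forall (F : 'I_d -> 'I_d -> R), \sum_i' \sum_j (0 * F i' j) = 0.
  by move=> F; rewrite big1 // => i' _; rewrite big1 // => j _; rewrite mul0r.
have Z' : forall (F : 'I_d -> R), \sum_j (0 * F j) = 0.
  by move=> F; rewrite big1 // => j _; rewrite mul0r.
rewrite andbF /= Z add0r.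
have -> : \sum_i' \sum_j ((if ~~ c1 && true && (i' == i) && (j == i) then 1 else 0) * H1 x (true, false, i', j))
   = if c1 then 0 else pp x i.
  case: c1 => /=; first by rewrite Z.
  transitivity (\sum_i' (if i' == i then \sum_j (if j == i then H1 x (true, false, i', j) else 0) else 0)); last first.
    by rewrite sum_delta sum_delta H1E.
  apply: eq_bigr => i' _.
  case: (i' == i); rewrite /= ?andbF; last by rewrite Z' .
  by apply: eq_bigr => j _; case: (j == i); rewrite ?mul1r ?mul0r.
have D : forall (c : bool) (a : R), \sum_i' \sum_j ((if i' == i then a else 0) * H1 x (false, c, i', j))
   = a * \sum_j H1 x (false, c, i, j).
  move=> c a; transitivity (\sum_i' (if i' == i then a * \sum_j H1 x (false, c, i', j) else 0)); last by rewrite sum_delta.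
  apply: eq_bigr => i' _; case: (i' == i); last by rewrite Z'.
  by rewrite mulr_sumr.
rewrite !D /rk /step.
have -> : \sum_j (relu ((x i ord0 - x j ord0) / dl) - relu ((x i ord0 - x j ord0) / dl - 1))
  = \sum_j H1 x (false, false, i, j) - \sum_j H1 x (false, true, i, j).
  by rewrite -sumrB; apply: eq_bigr => j _; rewrite !H1E.
congr relu; rewrite /bb2; move: (if c1 then 0 else pp x i) => A; move: (c2 : nat)%:R => C; ring.
Qed.


Lemma net_eq x k :
  relu_net2 W1 B1 W2 B2 W3 B3 x k ord0 = yk x k.
Proof.
have h1E : forall a, relu_mx (W1 *m x + B1) a ord0 = H1 x (e4 a).
  move=> a; rewrite /relu_mx !mxE /H1; congr (relu (_ + _)).
  by apply: eq_bigr => m _; rewrite mxE.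
have h2E : forall a, relu_mx (W2 *m relu_mx (W1 *m x + B1) + B2) a ord0 = H2 x (e4 a).
  move=> a; rewrite /relu_mx !mxE /H2 -sumE; congr (relu (_ + _)).
  apply: eq_bigr => a' _; rewrite !mxE /H1; congr (_ * relu (_ + _)); apply: eq_bigr => m _; by rewrite mxE.
rewrite /relu_net2 /B3 !mxE addr0.
transitivity (\sum_u w3 k u * H2 x u).
  by rewrite -sumE; apply: eq_bigr => a _; rewrite h2E mxE.
rewrite sumT4 !big_bool /=.
have D : forall (c1 c2 : bool) (s : R), \sum_i \sum_k' ((if k' == k then s else 0) * H2 x (c1, c2, i, k'))
   = s * \sum_i H2 x (c1, c2, i, k).
  move=> c1 c2 s; rewrite mulr_sumr; apply: eq_bigr => i _.
  transitivity (\sum_k' (if k' == k then s * H2 x (c1, c2, i, k') else 0)); last by rewrite sum_delta.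
  by apply: eq_bigr => k' _; case: (k' == k); rewrite ?mul0r.
rewrite !D /yk.
rewrite !mulr_sumr -!big_split /=; apply: eq_bigr => i _.
rewrite !H2E /Gf /=.
have -> : pp x i + k%:R - 0%:R - rk x i = pp x i + k%:R - rk x i by rewrite subr0.
have -> : 0 + k%:R - 0%:R - rk x i = k%:R - rk x i by rewrite subr0 add0r.
have -> : pp x i + k%:R - 1%:R - rk x i = pp x i + (k%:R - 1) - rk x i by rewrite addrA.
have -> : 0 + k%:R - 1%:R - rk x i = k%:R - 1 - rk x i by rewrite add0r.
ring.
Qed.

End Net.
Lemma relu_cases (R : realType) (z : R) : (0 <= z /\ relu z = z) \/ (z < 0 /\ relu z = 0).
Proof.
rewrite /relu; case: (lerP 0 z) => h.
  by left; split => //; rewrite max_r.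
by right; split => //; rewrite max_l // ltW.
Qed.

Ltac relu4 a1 a2 a3 a4 :=
  case: (relu_cases a1) => [[? ->]|[? ->]];
  case: (relu_cases a2) => [[? ->]|[? ->]];
  case: (relu_cases a3) => [[? ->]|[? ->]];
  case: (relu_cases a4) => [[? ->]|[? ->]].

Lemma Gf_diff (R : realType) (p r c : R) : 0 <= p ->
  0 <= Gf p r c - Gf p r (c - 1) <= p.
Proof.
move=> hp; rewrite /Gf.
relu4 (p + c - r) (c - r) (p + (c - 1) - r) (c - 1 - r); apply/andP; split; lra.
Qed.

Lemma Gf_int (R : realType) (p : R) (n m : nat) : 0 <= p <= 1 ->
  Gf p n%:R m%:R - Gf p n%:R (m%:R - 1) = if n == m then p else 0.
Proof.
move=> /andP [hp0 hp1]; rewrite /Gf.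
have [hlt|heq|hgt] := ltngtP n m.
- have h : n%:R + 1 <= m%:R :> R by rewrite natr1 ler_nat.
  relu4 (p + m%:R - n%:R : R) (m%:R - n%:R : R) (p + (m%:R - 1) - n%:R : R) (m%:R - 1 - n%:R : R); lra.
- have h : m%:R + 1 <= n%:R :> R by rewrite natr1 ler_nat.
  relu4 (p + m%:R - n%:R : R) (m%:R - n%:R : R) (p + (m%:R - 1) - n%:R : R) (m%:R - 1 - n%:R : R); lra.
- subst n.
  relu4 (p + m%:R - m%:R : R) (m%:R - m%:R : R) (p + (m%:R - 1) - m%:R : R) (m%:R - 1 - m%:R : R); lra.
Qed.

Lemma linf_ge0 (R : realType) d (x : 'cV[R]_d) : 0 <= linf x.
Proof.
rewrite /linf; elim/big_ind: _ => // a b ha hb.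
by rewrite le_max ha.
Qed.

Lemma linf_ge (R : realType) d (x : 'cV[R]_d) i : `|x i ord0| <= linf x.
Proof. rewrite /linf. exact: (le_bigmax 0 (fun i => `|x i ord0|) i). Qed.

Lemma sort_ok (R : realType) d (dl : R) (x : 'cV[R]_d) : 0 < dl ->
  in_S dl x -> (forall i, x i ord0 != 0) ->
  sorts_to x (relu_net2 (W1 d dl) (B1 R d) (W2 R d) (B2 R d) (W3 R d) (B3 R d) x).
Proof.
move=> hdl [hS1 hS2] hnz.
have hx : forall i, dl <= x i ord0 <= 1 - dl by move=> i; exact: hS1 i (hnz i).
pose A i := [set j | x j ord0 < x i ord0].
pose Rk i := #|A i|.
have stepE : forall i j, step dl (x i ord0 - x j ord0) = ((x j ord0 < x i ord0)%R : nat)%:R.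
  move=> i j; rewrite /step.
  case: (ltrP (x j ord0) (x i ord0)) => h.
    have hij : i != j by apply/eqP => e; rewrite e ltxx in h.
    have := hS2 i j hij (hnz i) (hnz j); rewrite ger0_norm; last by rewrite subr_ge0 ltW.
    move=> hd.
    have h1 : 1 <= (x i ord0 - x j ord0) / dl by rewrite ler_pdivlMr // mul1r.
    rewrite /relu !max_r /=; lra.
  have h1 : (x i ord0 - x j ord0) / dl <= 0 by rewrite ler_pdivrMr // mul0r subr_le0.
  by rewrite /relu !max_l //; [rewrite subrr | lra].
have rkE : forall i, rk dl x i = (Rk i)%:R.
  move=> i; rewrite /rk /Rk -sum1_card natr_sum [RHS]big_mkcond /=.
  by apply: eq_bigr => j _; rewrite stepE inE; case: ifP.
have Rk_mono : forall i j, x i ord0 < x j ord0 -> (Rk i < Rk j)%N.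
  move=> i j hij; apply: proper_card; apply/properP; split.
    by apply/subsetP => l; rewrite !inE => hl; apply: lt_trans hl hij.
  by exists i; rewrite !inE ?ltxx.
have Rk_lt : forall i, (Rk i < d)%N.
  move=> i; have := cardC (A i); rewrite card_ord => <-.
  rewrite -[X in (X < _)%N]addn0 ltn_add2l; apply/card_gt0P.
  by exists i; rewrite !inE ltxx.
pose sg i := Ordinal (Rk_lt i).
have sg_inj : injective sg.
  move=> i j /(congr1 val) /= e; apply/eqP; apply: contraT => hij.
  have hd := hS2 i j hij (hnz i) (hnz j).
  case: (ltgtP (x i ord0) (x j ord0)) => h.
  - by have := Rk_mono _ _ h; rewrite e ltnn.
  - by have := Rk_mono _ _ h; rewrite e ltnn.
  - by rewrite h subrr normr0 in hd; lra.
pose s := perm sg_inj.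
have outE : forall k, relu_net2 (W1 d dl) (B1 R d) (W2 R d) (B2 R d) (W3 R d) (B3 R d) x k ord0
   = x (s^-1 k)%g ord0.
  move=> k; rewrite net_eq /yk.
  transitivity (\sum_i (if i == (s^-1 k)%g then x i ord0 else 0)); last by rewrite sum_delta.
  apply: eq_bigr => i _.
  have hp : pp x i = x i ord0 by rewrite /pp /relu max_r //; have := hx i; lra.
  rewrite rkE hp Gf_int; last by have := hx i; lra.
  have -> : (Rk i == k) = (s i == k) by rewrite permE.
  by have -> : (s i == k) = (i == (s^-1)%g k) by apply/eqP/eqP => [<-|->]; [rewrite permK | rewrite permKV].
split.
  by exists (s^-1)%g => k; rewrite outE.
move=> i j hij; rewrite !outE.
rewrite leNgt; apply/negP => h.
have := Rk_mono _ _ h.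
have e : forall k, Rk (s^-1 k)%g = k.
  by move=> k; have := permKV s k; rewrite permE => /(congr1 val).
rewrite !e; lia.
Qed.

Lemma bound_ok (R : realType) d (dl : R) (x : 'cV[R]_d) k :
  `|relu_net2 (W1 d dl) (B1 R d) (W2 R d) (B2 R d) (W3 R d) (B3 R d) x k ord0| <= d%:R * linf x.
Proof.
rewrite net_eq /yk.
have hp : forall i, 0 <= pp x i <= linf x.
  move=> i; have := linf_ge x i; rewrite /pp.
  case: (relu_cases (x i ord0)) => [[h ->]|[h ->]].
    by rewrite ger0_norm // h.
  by rewrite lexx /= => _; apply: linf_ge0.
have ht : forall i, 0 <= Gf (pp x i) (rk dl x i) k%:R - Gf (pp x i) (rk dl x i) (k%:R - 1) <= pp x i.
  by move=> i; apply: Gf_diff; case/andP: (hp i).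
rewrite ger0_norm; last by apply: sumr_ge0 => i _; case/andP: (ht i).
apply: (@le_trans _ _ (\sum_(i < d) linf x)).
  apply: ler_sum => i _; case/andP: (ht i) => _ h; case/andP: (hp i) => _ h'.
  exact: le_trans h h'.
by rewrite sumr_const card_ord mulr_natl.
Qed.

Lemma one_le_inv (R : realType) (dl : R) : 0 < dl -> dl <= 1 -> 1 <= 1 / dl.
Proof. by move=> h0 h1; rewrite ler_pdivlMr // mul1r. Qed.

Lemma W1_bd (R : realType) d (dl : R) : 0 < dl -> dl <= 1 -> entries_bounded (W1 d dl) (1 / dl).
Proof.
move=> h0 h1 a m; rewrite mxE /w1.
have hi := one_le_inv h0 h1.
case: (e4 a) => [[[b c] i] j].
case: b.
  by case: (m == i); rewrite ?normr1 ?normr0 //; apply: le_trans hi.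
rewrite normrM normfV (gtr0_norm h0) ler_pM2r ?invr_gt0 //.
by case: (m == i); case: (m == j); rewrite ?subrr ?subr0 ?sub0r ?normrN ?normr1 ?normr0.
Qed.

Lemma W2_bd (R : realType) d (dl : R) : 0 < dl -> dl <= 1 -> entries_bounded (W2 R d) (1 / dl).
Proof.
move=> h0 h1 a a'; rewrite mxE /w2.
have hi := one_le_inv h0 h1.
case: (e4 a) => [[[c1 c2] i] k]; case: (e4 a') => [[[b c] i'] j].
have h0' : 0 <= 1 / dl by apply: le_trans hi.
case: b; first by case: ifP => _; rewrite ?normr1 ?normr0.
by case: ifP => _; case: c; rewrite ?normrN ?normr1 ?normr0.
Qed.

Lemma W3_bd (R : realType) d (dl : R) : 0 < dl -> dl <= 1 -> entries_bounded (W3 R d) (1 / dl).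
Proof.
move=> h0 h1 k a; rewrite mxE /w3.
have hi := one_le_inv h0 h1.
case: (e4 a) => [[[c1 c2] i] k'].
have h0' : 0 <= 1 / dl by apply: le_trans hi.
by case: ifP => _; case: c1; case: c2; rewrite ?mulrN1 ?mulr1 ?opprK ?normrN ?normr1 ?normr0.
Qed.

Theorem propositionB1 (R : realType) (d : nat) (delta : R) :
  (0 < d)%N -> 0 < delta ->
  exists (W1 : 'M[R]_(4 * d ^ 2, d)) (b1 : 'cV[R]_(4 * d ^ 2))
         (W2 : 'M[R]_(4 * d ^ 2, 4 * d ^ 2)) (b2 : 'cV[R]_(4 * d ^ 2))
         (W3 : 'M[R]_(d, 4 * d ^ 2)) (b3 : 'cV[R]_d),
    [/\ entries_bounded W1 (1 / delta),
        entries_bounded W2 (1 / delta),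
        entries_bounded W3 (1 / delta),
        (forall x : 'cV[R]_d, in_S delta x -> (forall i, x i ord0 != 0) ->
           sorts_to x (relu_net2 W1 b1 W2 b2 W3 b3 x)) &
        (forall (x : 'cV[R]_d) (i : 'I_d),
           `|relu_net2 W1 b1 W2 b2 W3 b3 x i ord0| <= d%:R * linf x)].
Proof.
move=> hd hdl.
case: (lerP delta 1) => h1.
  exists (W1 d delta), (B1 R d), (W2 R d), (B2 R d), (W3 R d), (B3 R d); split.
  - exact: W1_bd.
  - exact: W2_bd.
  - exact: W3_bd.
  - by move=> x hS hnz; apply: sort_ok.
  - by move=> x i; apply: bound_ok.
have hb : forall m n (M : 'M[R]_(m, n)), M = 0 -> entries_bounded M (1 / delta).
  by move=> m n M -> i j; rewrite mxE normr0 divr_ge0 // ltW.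
exists 0, 0, 0, 0, 0, 0; split; try exact: hb.
- move=> x [hS _] hnz; have := hS (Ordinal hd) (hnz _); case/andP => ha hb'.
  exfalso; lra.
- move=> x i; rewrite /relu_net2 mul0mx addr0 mxE normr0.
  by apply: mulr_ge0; [apply: ler0n | apply: linf_ge0].
Qed.
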